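(* Let $q$ be a prime power, $\chi$ a multiplicative character of $\mathbb{F}_q^*$ and $\lambda$ an additive character of $\mathbb{F}_q$. For every $n\ge 1$, \[ \sum_{g\in GL(n,q)}\chi(\det g)\,\lambda(\operatorname{tr} g) = \begin{cases} |GL(n,q)| & \text{if } \lambda,\chi \text{ are both trivial},\\ 0 & \text{if } \lambda \text{ is trivial and } \chi \text{ nontrivial},\\ q^{\binom n2}\,G(\chi,\lambda)^n & \text{if } \lambda \text{ is nontrivial}.\end{cases}\]
   Context: $GL(n,q)$ is the group of invertible $n\times n$ matrices over $\mathbb{F}_q$. The Gauss sum is $G(\chi,\lambda)=\sum_{x\in\mathbb{F}_q^*}\chi(x)\lambda(x)$. *)

(* Defs.v *)
From mathcomp Require Import all_boot all_algebra all_field.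
Set Implicit Arguments. Unset Strict Implicit. Unset Printing Implicit Defensive.
Import GRing.Theory.
Local Open Scope ring_scope.

(* A multiplicative character of F^*, given as a function on F whose value
   at 0 is irrelevant (never used): a group hom F^* -> C^*. *)
Definition is_mult_char (F : finFieldType) (chi : F -> algC) : Prop :=
  chi 1 = 1 /\ forall x y : F, x != 0 -> y != 0 -> chi (x * y) = chi x * chi y.

Definition is_add_char (F : finFieldType) (lam : F -> algC) : Prop :=
  lam 0 = 1 /\ forall x y : F, lam (x + y) = lam x * lam y.

Definition mult_char_trivial (F : finFieldType) (chi : F -> algC) : Prop :=
  forall x : F, x != 0 -> chi x = 1.

Definition add_char_trivial (F : finFieldType) (lam : F -> algC) : Prop :=
  forall x : F, lam x = 1.

Definition gauss_sum (F : finFieldType) (chi lam : F -> algC) : algC :=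
  \sum_(x : F | x != 0) chi x * lam x.

(* Main.v *)
Require Import Defs.
From mathcomp Require Import all_boot all_algebra all_field.
From mathcomp Require Import ring.
Import GRing.Theory.
Set Implicit Arguments. Unset Strict Implicit. Unset Printing Implicit Defensive.
Local Open Scope ring_scope.

Lemma sum_mx1 (F : finFieldType) (f : F -> algC) :
  \sum_(a : 'M[F]_1) f (a 0 0) = \sum_(x : F) f x.
Proof.
rewrite (reindex (fun x : F => x%:M)) /=.
  by apply: eq_bigr => x _; rewrite mxE eqxx mulr1n.
by exists (fun a : 'M[F]_1 => a 0 0) => [x _|a _]; rewrite ?mxE ?eqxx ?mulr1n // -mx11_scalar.
Qed.

Lemma sum_block (F : finFieldType) n (f : 'M[F]_(1+n) -> algC) :
  \sum_(g : 'M[F]_(1+n)) f g = \sum_(D : 'M[F]_n) \sum_(c : 'M[F]_(n,1))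
     \sum_(b : 'M[F]_(1,n)) \sum_(a : 'M[F]_1) f (block_mx a b c D).
Proof.
symmetry.
under eq_bigr => D _ do under eq_bigr => c _ do rewrite pair_bigA.
under eq_bigr => D _ do rewrite pair_bigA.
rewrite pair_bigA.
rewrite [RHS](reindex (fun p : 'M[F]_n * ('M[F]_(n,1) * ('M[F]_(1,n) * 'M[F]_1)) =>
   block_mx p.2.2.2 p.2.2.1 p.2.1 p.1)) //=.
exists (fun g => (drsubmx g, (dlsubmx g, (ursubmx g, ulsubmx g)))) => [[D [c [b a]]] _|g _] /=.
  by rewrite block_mxKdr block_mxKdl block_mxKur block_mxKul.
by rewrite submxK.
Qed.

Definition ext0 (F : finFieldType) (chi : F -> algC) (x : F) : algC :=
  if x == 0 then 0 else chi x.

Lemma ext0_mul (F : finFieldType) (chi : F -> algC) (d y : F) :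
  is_mult_char chi -> d != 0 -> ext0 chi (y * d) = ext0 chi y * chi d.
Proof.
move=> [_ hm] hd; rewrite /ext0 mulf_eq0 (negbTE hd) orbF.
by case: ifP => [_|/negbT hy]; rewrite ?mul0r // hm.
Qed.

Lemma sum_lam0 (F : finFieldType) (lam : F -> algC) (y : F) :
  is_add_char lam -> lam y != 1 -> \sum_(x : F) lam x = 0.
Proof.
move=> [_ ha] hy.
have: \sum_(x : F) lam x = lam y * \sum_(x : F) lam x.
  rewrite {1}(reindex_inj (addrI y)) /= mulr_sumr.
  by apply: eq_bigr => x _; rewrite ha.
move/eqP; rewrite -subr_eq0 -{1}[\sum_x _]mul1r -mulrBl mulf_eq0 subr_eq0 eq_sym.
by rewrite (negbTE hy) /= => /eqP.
Qed.

Lemma sum_lam_shift (F : finFieldType) (lam : F -> algC) (y s : F) :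
  is_add_char lam -> lam y != 1 -> \sum_(x : F) lam (x + s) = 0.
Proof.
move=> hl hy; rewrite (reindex_inj (addIr (- s))) /=.
under eq_bigr => x _ do rewrite addrNK.
exact: sum_lam0 hl hy.
Qed.

Lemma inner_a (F : finFieldType) (chi lam : F -> algC) (y d R s : F) :
  is_mult_char chi -> is_add_char lam -> lam y != 1 ->
  \sum_(x : F) ext0 chi (x * d + R) * lam (x + s) =
  if d == 0 then 0 else chi d * lam (s - R / d) * \sum_(x : F) ext0 chi x * lam x.
Proof.
move=> hc hl hy; case: ifP => [/eqP -> | /negbT hd].
  under eq_bigr => x _ do rewrite mulr0 add0r.
  by rewrite -mulr_sumr (sum_lam_shift s hl hy) mulr0.
rewrite (reindex_inj (addIr (- (R / d)))) /= mulr_sumr.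
apply: eq_bigr => x _.
rewrite mulrDl mulNr divfK // addrNK ext0_mul //.
have -> : x - R / d + s = x + (s - R / d) by rewrite addrAC -addrA.
by rewrite hl.2; ring.
Qed.

Lemma det_block_split (F : finFieldType) n (a : 'M[F]_1) (b : 'M[F]_(1,n))
  (c : 'M[F]_(n,1)) (D : 'M[F]_n) :
  \det (block_mx a b c D) = a 0 0 * \det D + \det (block_mx 0 b c D).
Proof.
have -> : \det D = \det (block_mx (1 : 'M[F]_1) 0 c D).
  by rewrite det_lblock det1 mul1r.
rewrite -[\det (block_mx 0 b c D)]mul1r.
apply: (determinant_multilinear (i0 := 0)).
- apply/rowP => j; rewrite !mxE split1 unlift_none /= !mxE.
  case: (@split 1 n j) => k; rewrite ?mxE ?ord1 /=.
    by rewrite mulr1 mulr0 addr0.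
  by rewrite mulr0 add0r mul1r.
- by apply/matrixP => i j; rewrite !mxE split1 liftK /=.
- by apply/matrixP => i j; rewrite !mxE split1 liftK /=.
Qed.



Lemma det_block_unit (F : finFieldType) n (b : 'M[F]_(1,n))
  (c : 'M[F]_(n,1)) (D : 'M[F]_n) : D \in unitmx ->
  \det (block_mx 0 b c D) = - (b *m invmx D *m c) 0 0 * \det D.
Proof.
move=> hD.
have -> : block_mx 0 b c D = block_mx 1 (b *m invmx D) 0 1 *m
                             block_mx (- (b *m invmx D *m c)) 0 c D.
  rewrite mulmx_block !mul1mx !mul0mx !add0r addNr mulmxKV //.
rewrite det_mulmx det_ublock det_lblock !det1 !mul1r det_mx11 mxE.
by [].
Qed.

Lemma sum_c (F : finFieldType) (lam : F -> algC) (y : F) n (b : 'M[F]_(1,n)) :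
  is_add_char lam -> lam y != 1 ->
  \sum_(c : 'M[F]_(n,1)) lam ((b *m c) 0 0) = if b == 0 then (#|F| ^ n)%:R else 0.
Proof.
move=> hl hy; case: ifP => [/eqP -> | /negbT hb].
  under eq_bigr => c _ do rewrite mul0mx mxE hl.1.
  by rewrite sumr_const card_mx muln1.
have [j hj] : exists j, b 0 j != 0.
  apply/existsP; apply: contraR hb => /existsPn H.
  by apply/eqP/matrixP => i k; rewrite ord1 mxE; apply/eqP; rewrite -[_ == _]negbK H.
set e : 'M[F]_(n,1) := (y / b 0 j) *: delta_mx j 0.
have: \sum_(c : 'M[F]_(n,1)) lam ((b *m c) 0 0) =
      lam y * \sum_(c : 'M[F]_(n,1)) lam ((b *m c) 0 0).
  rewrite {1}(reindex_inj (addIr e)) /= mulr_sumr.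
  apply: eq_bigr => c _; rewrite mulmxDr mxE hl.2 mulrC; congr (_ * _).
  by rewrite /e -scalemxAr -colE !mxE divfK.
move/eqP; rewrite -subr_eq0 -{1}[\sum_x _]mul1r -mulrBl mulf_eq0 subr_eq0 eq_sym.
by rewrite (negbTE hy) /= => /eqP.
Qed.

Lemma sum_bc (F : finFieldType) (lam : F -> algC) (y : F) n (D : 'M[F]_n) :
  is_add_char lam -> lam y != 1 -> D \in unitmx ->
  \sum_(c : 'M[F]_(n,1)) \sum_(b : 'M[F]_(1,n)) lam ((b *m invmx D *m c) 0 0)
    = (#|F| ^ n)%:R.
Proof.
move=> hl hy hD; rewrite exchange_big /=.
rewrite (reindex_inj (can_inj (mulmxK hD))) /=.
under eq_bigr => b _ do rewrite mulmxK // (sum_c _ hl hy).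
by rewrite -big_mkcond /= big_pred1_eq.
Qed.

Definition Tsum (F : finFieldType) (chi lam : F -> algC) n : algC :=
  \sum_(g : 'M[F]_n) ext0 chi (\det g) * lam (\tr g).

Lemma step (F : finFieldType) (chi lam : F -> algC) (y : F) n :
  is_mult_char chi -> is_add_char lam -> lam y != 1 ->
  Tsum chi lam n.+1 = (#|F| ^ n)%:R * (\sum_(x : F) ext0 chi x * lam x) * Tsum chi lam n.
Proof.
move=> hc hl hy.
rewrite /Tsum (sum_block (fun g => ext0 chi (\det g) * lam (\tr g))) mulr_sumr.
apply: eq_bigr => D _.
have inner : forall c b, \sum_(a : 'M[F]_1)
    ext0 chi (\det (block_mx a b c D)) * lam (\tr (block_mx a b c D)) =
    if \det D == 0 then 0 else chi (\det D) * lam (\tr D - \det (block_mx 0 b c D) / \det D)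
       * \sum_(x : F) ext0 chi x * lam x.
  move=> c b.
  under eq_bigr => a _ do rewrite det_block_split mxtrace_block trace_mx11.
  rewrite (sum_mx1 (fun x => ext0 chi (x * \det D + \det (block_mx 0 b c D)) * lam (x + \tr D))).
  exact: inner_a hc hl hy.
under eq_bigr => c _ do under eq_bigr => b _ do rewrite inner.
have [hd0|hd] := eqVneq (\det D) 0.
  by rewrite /ext0 hd0 eqxx mul0r mulr0 big1 // => c _; rewrite big1 // => b _; rewrite eqxx.
have hD : D \in unitmx by rewrite unitmxE unitfE.
transitivity (\sum_(c : 'M[F]_(n,1)) \sum_(b : 'M[F]_(1,n))
   (chi (\det D) * lam (\tr D) * \sum_(x : F) ext0 chi x * lam x) *
      lam ((b *m invmx D *m c) 0 0)).
  apply: eq_bigr => c _; apply: eq_bigr => b _.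
  rewrite det_block_unit // mulfK // opprK hl.2; ring.
under eq_bigr => c _ do rewrite -mulr_sumr.
rewrite -mulr_sumr (sum_bc hl hy hD) /ext0 (negbTE hd); ring.
Qed.

Lemma Tsum_closed (F : finFieldType) (chi lam : F -> algC) (y : F) n :
  is_mult_char chi -> is_add_char lam -> lam y != 1 ->
  Tsum chi lam n = (#|F| ^ 'C(n, 2))%:R * (\sum_(x : F) ext0 chi x * lam x) ^+ n.
Proof.
move=> hc hl hy; elim: n => [|n IH].
  rewrite /Tsum (eq_bigr (fun _ => 1)) => [|g _].
    by rewrite sumr_const card_mx /= expr0 mulr1.
  by rewrite det_mx00 /ext0 oner_eq0 hc.1 /mxtrace big_ord0 hl.1 mulr1.
rewrite (step _ hc hl hy) IH binS bin1 exprS expnD natrM; ring.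
Qed.

Theorem theorem1 (F : finFieldType) (chi lam : F -> algC) (n : nat)
  (hchi : is_mult_char chi) (hlam : is_add_char lam) (hn : (0 < n)%N) :
  let S := \sum_(g : 'M[F]_n | g \in unitmx) chi (\det g) * lam (\tr g) in
  [/\ (add_char_trivial lam -> mult_char_trivial chi ->
         S = (#|[set g : 'M[F]_n | g \in unitmx]|)%:R),
      (add_char_trivial lam -> ~ mult_char_trivial chi -> S = 0) &
      (~ add_char_trivial lam ->
         S = (#|F| ^ 'C(n, 2))%:R * gauss_sum chi lam ^+ n)].
Proof.
move=> S; split.
- move=> hl hc; rewrite /S (eq_bigr (fun _ => 1)) => [|g hg].
    by rewrite sumr_const cardsE.
  by rewrite hl hc ?mulr1 // -unitfE -unitmxE.
- move=> hl hc.
  have [a /andP [ha hca]] : exists a, (a != 0) && (chi a != 1).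
    apply/existsP; case/boolP: [exists a, (a != 0) && (chi a != 1)] => // /existsPn H.
    exfalso; apply: hc => x hx; apply/eqP; move: (H x); rewrite hx /=.
    by rewrite negbK.
  set i0 : 'I_n := Ordinal hn.
  set P : 'M[F]_n := diag_mx (\row_(i < n) if i == i0 then a else 1).
  have hdP : \det P = a.
    rewrite det_diag (bigD1 i0) //= big1 => [|i hi]; rewrite mxE ?eqxx ?mulr1 //.
    by rewrite (negbTE hi).
  have hP : P \in unitmx by rewrite unitmxE hdP unitfE.
  have : S = chi a * S.
    rewrite /S {1}(reindex_inj (can_inj (mulKmx hP))) /= mulr_sumr.
    apply: eq_big => [g|g hg]; first by rewrite unitmx_mul hP.
    rewrite !hl !mulr1 det_mulmx hdP hchi.2 //.
    by move: hg; rewrite unitmx_mul hP unitmxE unitfE.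
  move/eqP; rewrite -subr_eq0 -{1}[S]mul1r -mulrBl mulf_eq0 subr_eq0 eq_sym.
  by rewrite (negbTE hca) /= => /eqP.
- move=> hnt.
  have [y hy] : exists y, lam y != 1.
    apply/existsP; case/boolP: [exists y, lam y != 1] => // /existsPn H.
    by exfalso; apply: hnt => x; apply/eqP; move: (H x); rewrite negbK.
  have -> : gauss_sum chi lam = \sum_(x : F) ext0 chi x * lam x.
    rewrite /gauss_sum big_mkcond /=; apply: eq_bigr => x _.
    by rewrite /ext0; case: eqP => _; rewrite ?mul0r.
  rewrite -(Tsum_closed n hchi hlam hy) /S /Tsum big_mkcond /=.
  apply: eq_bigr => g _; rewrite unitmxE unitfE /ext0.
  by case: eqP => _; rewrite ?mul0r.
Qed.
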